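(* Let $(x_i)_{i\in\mathbf Z}$ be an admissible frontier, embedded in the plane as the lattice path $(P_i)_{i\in\mathbf Z}$. Then there exists a unique $SL_2$-tiling $t:\mathbf Z^2\to\mathbf N$ extending the embedding, i.e. with $t(P_i)=1$ for all $i$. Moreover, for every point $M$ below the frontier, if the word of $M$ is $x_1x_2\cdots x_{n+1}$ (with $n\ge1$, $x_i\in\{x,y\}$), then $$t(M)=(1,1)\,M(x_2)M(x_3)\cdots M(x_n)\begin{pmatrix}1\\1\end{pmatrix},$$ where $M(x)=\begin{pmatrix}1&1\\0&1\end{pmatrix}$, $M(y)=\begin{pmatrix}1&0\\1&1\end{pmatrix}$ (empty product $=$ identity).
   Context: Use Cartesian coordinates on $\mathbf Z^2$ (first coordinate to the right, second upward). An $SL_2$-tiling with values in a commutative ring (or semiring inside a ring) $R$ is a map $t:\mathbf Z^2\to R$ such that for all $(a,b)\in\mathbf Z^2$: $t(a,b+1)\,t(a+1,b)-t(a,b)\,t(a+1,b+1)=1$ (every connected $2\times2$ block, read as displayed in the plane, has determinant $1$). A frontier is a bi-infinite word $(x_i)_{i\in\mathbf Z}$ over $\{x,y\}$; it is admissible if neither $(x_n)_{n\ge0}$ nor $(x_n)_{n\le0}$ is ultimately constant. It is embedded (up to translation) as lattice points $P_i$, $i\in\mathbf Z$, with $P_i-P_{i-1}=(1,0)$ if $x_i=x$ and $(0,1)$ if $x_i=y$. A point $M=(u,v)$ not on the path is below the frontier if some path point $(u,v')$ has $v'>v$. For such $M$, let $L=P_r$ be the path point in row $v$ with largest first coordinate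 ($<u$), and $U=P_s$ the path point in column $u$ with smallest second coordinate ($>v$); then $r<s$ and the word of $M$ is $x_{r+1}x_{r+2}\cdots x_s$ (it begins with $y$ and ends with $x$). *)

(* Defs.v *)
From HB Require Import structures.
From mathcomp Require Import all_boot all_order all_algebra.
Set Implicit Arguments. Unset Strict Implicit. Unset Printing Implicit Defensive.
Import Order.TTheory GRing.Theory Num.Theory.
Local Open Scope ring_scope.

(* Letters: true = x (horizontal step), false = y (vertical step). *)
Definition frontier := int -> bool.
Definition point := (int * int)%type.

Definition ult_const_right (w : frontier) : Prop :=
  exists (N : int) (c : bool), forall n : int, N <= n -> w n = c.
Definition ult_const_left (w : frontier) : Prop :=
  exists (N : int) (c : bool), forall n : int, n <= N -> w n = c.
Definition admissible (w : frontier) : Prop :=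
  ~ ult_const_right w /\ ~ ult_const_left w.

Definition step (b : bool) : point := if b then (1, 0) else (0, 1).

Definition embedding (w : frontier) (P : int -> point) : Prop :=
  forall i : int, P i = ((P (i - 1)).1 + (step (w i)).1,
                         (P (i - 1)).2 + (step (w i)).2).

(* SL_2-tiling with values in N: t(a,b+1) t(a+1,b) - t(a,b) t(a+1,b+1) = 1,
   written additively in nat. *)
Definition SL2_tiling (t : point -> nat) : Prop :=
  forall a b : int,
    let p00 := (a, b) in let p01 := (a, b + 1) in
    let p10 := (a + 1, b) in let p11 := (a + 1, b + 1) in
    (t p01 * t p10 = t p00 * t p11 + 1)%N.

Definition below (P : int -> point) (M : point) : Prop :=
  (forall i, P i <> M) /\ exists i, (P i).1 = M.1 /\ M.2 < (P i).2.

Definition is_L (P : int -> point) (M : point) (r : int) : Prop :=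
  (P r).2 = M.2 /\ (P r).1 < M.1 /\
  forall i, (P i).2 = M.2 -> (P i).1 < M.1 -> (P i).1 <= (P r).1.

Definition is_U (P : int -> point) (M : point) (s : int) : Prop :=
  (P s).1 = M.1 /\ M.2 < (P s).2 /\
  forall i, (P i).1 = M.1 -> M.2 < (P i).2 -> (P s).2 <= (P i).2.

(* M(x) = [[1,1],[0,1]], M(y) = [[1,0],[1,1]] *)
Definition Mx (b : bool) : 'M[int]_2 :=
  \matrix_(i < 2, j < 2)
    (if (i == j :> nat) then 1
     else if b then (if ((i == 0%N :> nat) && (j == 1%N :> nat)) then 1 else 0)
     else (if ((i == 1%N :> nat) && (j == 0%N :> nat)) then 1 else 0)).

Definition word_mat (l : seq bool) : 'M[int]_2 :=
  foldr (fun b A => Mx b *m A) 1%:M l.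

(* For the word x_{r+1} ... x_s of M, the inner letters x_{r+2} ... x_{s-1}. *)
Definition inner_word (w : frontier) (r s : int) : seq bool :=
  mkseq (fun k : nat => w (r + 2 + k%:Z)) (absz (s - r - 2)%R).

Definition ones_row : 'rV[int]_2 := \row_(j < 2) 1.
Definition ones_col : 'cV[int]_2 := \col_(i < 2) 1.

Definition word_value (l : seq bool) : int :=
  (ones_row *m word_mat l *m ones_col) ord0 ord0.

(* Main.v *)
Require Import Defs.
From Stdlib Require Import ZArith Lia ClassicalEpsilon FunctionalExtensionality Classical.
From HB Require Import structures.
From mathcomp Require Import all_boot all_order all_algebra.
Import Order.TTheory GRing.Theory Num.Theory.
Delimit Scope Z_scope with Z.
Local Open Scope ring_scope.
Set Implicit Arguments. Unset Strict Implicit.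


Module ZM.
Local Open Scope Z_scope.
Record M2 := mk2 { a11 : Z; a12 : Z; a21 : Z; a22 : Z }.
Definition mul2 (A B : M2) := mk2 (a11 A * a11 B + a12 A * a21 B) (a11 A * a12 B + a12 A * a22 B)
  (a21 A * a11 B + a22 A * a21 B) (a21 A * a12 B + a22 A * a22 B).
Definition I2 := mk2 1 0 0 1.
Definition MxZ (b : bool) := if b then mk2 1 1 0 1 else mk2 1 0 1 1.
Definition MiZ (b : bool) := if b then mk2 1 (-1) 0 1 else mk2 1 0 (-1) 1.
Definition det2 A := a11 A * a22 A - a12 A * a21 A.
Definition col1 A := (a11 A, a21 A).
Definition col2 A := (a12 A, a22 A).
Definition dv (u v : Z * Z) := fst u * snd v - snd u * fst v.
Definition NN A := 0 <= a11 A /\ 0 <= a12 A /\ 0 <= a21 A /\ 0 <= a22 A.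
Definition prodZ (l : seq bool) := foldr (fun b A => mul2 (MxZ b) A) I2 l.

Lemma mulMiMx A b : mul2 (mul2 A (MiZ b)) (MxZ b) = A.
Proof. destruct A, b; unfold mul2; cbn [mul2 a11 a12 a21 a22 I2 MxZ MiZ col1 col2 fst snd det2 dv]; f_equal; try ring. Qed.
Lemma mul_assoc A B C : mul2 A (mul2 B C) = mul2 (mul2 A B) C.
Proof. destruct A, B, C; unfold mul2; cbn [mul2 a11 a12 a21 a22 I2 MxZ MiZ col1 col2 fst snd det2 dv]; f_equal; try ring. Qed.
Lemma mulI A : mul2 A I2 = A.
Proof. destruct A; unfold mul2; cbn [mul2 a11 a12 a21 a22 I2 MxZ MiZ col1 col2 fst snd det2 dv]; f_equal; try ring. Qed.
Lemma Imul A : mul2 I2 A = A.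
Proof. destruct A; unfold mul2; cbn [mul2 a11 a12 a21 a22 I2 MxZ MiZ col1 col2 fst snd det2 dv]; f_equal; try ring. Qed.
Lemma det_Mx A b : det2 (mul2 A (MxZ b)) = det2 A.
Proof. destruct A, b; unfold det2, mul2; cbn [mul2 a11 a12 a21 a22 I2 MxZ MiZ col1 col2 fst snd det2 dv]; ring. Qed.
Lemma det_Mi A b : det2 (mul2 A (MiZ b)) = det2 A.
Proof. destruct A, b; unfold det2, mul2; cbn [mul2 a11 a12 a21 a22 I2 MxZ MiZ col1 col2 fst snd det2 dv]; ring. Qed.
Lemma col2_y A : col2 (mul2 A (MxZ false)) = col2 A.
Proof. destruct A; unfold col2, mul2; cbn [mul2 a11 a12 a21 a22 I2 MxZ MiZ col1 col2 fst snd det2 dv]; f_equal; try ring. Qed.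
Lemma col1_x A : col1 (mul2 A (MxZ true)) = col1 A.
Proof. destruct A; unfold col1, mul2; cbn [mul2 a11 a12 a21 a22 I2 MxZ MiZ col1 col2 fst snd det2 dv]; f_equal; try ring. Qed.
Lemma L1 Q B : dv (col1 Q) (col2 (mul2 Q B)) = det2 Q * a22 B.
Proof. destruct Q, B; unfold dv, col1, col2, det2, mul2; cbn [mul2 a11 a12 a21 a22 I2 MxZ MiZ col1 col2 fst snd det2 dv]; ring. Qed.
Lemma L2 Q B : dv (col1 (mul2 Q B)) (col2 Q) = det2 Q * a11 B.
Proof. destruct Q, B; unfold dv, col1, col2, det2, mul2; cbn [mul2 a11 a12 a21 a22 I2 MxZ MiZ col1 col2 fst snd det2 dv]; ring. Qed.
Lemma L3 Q : dv (col2 Q) (col2 (mul2 Q (MxZ true))) = - det2 Q.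
Proof. destruct Q; unfold dv, col1, col2, det2, mul2; cbn [mul2 a11 a12 a21 a22 I2 MxZ MiZ col1 col2 fst snd det2 dv]; ring. Qed.
Lemma L4 Q : dv (col1 Q) (col1 (mul2 Q (MxZ false))) = det2 Q.
Proof. destruct Q; unfold dv, col1, col2, det2, mul2; cbn [mul2 a11 a12 a21 a22 I2 MxZ MiZ col1 col2 fst snd det2 dv]; ring. Qed.
Lemma L5 Q : dv (col1 Q) (col2 Q) = det2 Q.
Proof. destruct Q; unfold dv, col1, col2, det2, mul2; cbn [mul2 a11 a12 a21 a22 I2 MxZ MiZ col1 col2 fst snd det2 dv]; ring. Qed.
Lemma plucker p q u v : dv p u * dv q v - dv q u * dv p v = dv p q * dv u v.
Proof. destruct p, q, u, v; unfold dv; cbn [mul2 a11 a12 a21 a22 I2 MxZ MiZ col1 col2 fst snd det2 dv]; ring. Qed.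
Lemma dv_anti p q : dv p q = - dv q p.
Proof. destruct p, q; unfold dv; cbn [mul2 a11 a12 a21 a22 I2 MxZ MiZ col1 col2 fst snd det2 dv]; ring. Qed.
Lemma NN_I : NN I2.
Proof. unfold NN; cbn [mul2 a11 a12 a21 a22 I2 MxZ MiZ col1 col2 fst snd det2 dv]; lia. Qed.
Lemma NN_Mxl A b : NN A -> NN (mul2 (MxZ b) A).
Proof. destruct A, b; unfold NN, mul2; cbn [mul2 a11 a12 a21 a22 I2 MxZ MiZ col1 col2 fst snd det2 dv]; lia. Qed.
Lemma NN_prod l : NN (prodZ l).
Proof. induction l; cbn [mul2 a11 a12 a21 a22 I2 MxZ MiZ col1 col2 fst snd det2 dv]; [apply NN_I | apply NN_Mxl; auto]. Qed.
Lemma prodZ_rcons l b : prodZ (rcons l b) = mul2 (prodZ l) (MxZ b).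
Proof.
  induction l as [|c l IH]; simpl. now rewrite mulI Imul.
  now rewrite IH mul_assoc.
Qed.
Lemma a22_formula B : a22 (mul2 (mul2 (MxZ false) B) (MxZ true)) = a11 B + a12 B + a21 B + a22 B.
Proof. destruct B; unfold mul2; cbn [mul2 a11 a12 a21 a22 I2 MxZ MiZ col1 col2 fst snd det2 dv]; ring. Qed.
End ZM.


Definition stepR (w : frontier) (f : int -> int) (c : bool) :=
  forall i, f i = f (i - 1) + (if w i == c then 1 else 0).

Lemma neq_negb (a b : bool) : a <> b -> a = ~~ b.
Proof. by case: a; case: b. Qed.

Lemma stepR1 w f c : stepR w f c -> forall i, f (i + 1) = f i + (if w (i + 1) == c then 1 else 0).
Proof. move=> H i; by rewrite H addrK. Qed.

Lemma mono_n w f c : stepR w f c -> forall (n : nat) i, f i <= f (i + n%:Z).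
Proof.
move=> H; elim=> [|n IH] i; first by rewrite addr0.
rewrite -addn1 PoszD addrA (stepR1 H); apply: (le_trans (IH i)).
by rewrite lerDl; case: ifP.
Qed.

Lemma int_split (i j : int) : i <= j -> j = i + ((absz (j - i)))%:Z.
Proof. by move=> h; rewrite gez0_abs ?subr_ge0 // addrCA subrr addr0. Qed.

Lemma mono w f c : stepR w f c -> forall i j, i <= j -> f i <= f j.
Proof. move=> H i j h; rewrite (int_split h); exact: mono_n. Qed.

Lemma unb_right w f c : stepR w f c -> ~ ult_const_right w ->
  forall m : nat, exists k, f 0 + m%:Z <= f k.
Proof.
move=> H nR; elim=> [|m [k Hk]]; first by exists 0; rewrite addr0.
have [n [hn wn]] : exists n, k + 1 <= n /\ w n = c.
  apply: NNPP => hne; apply: nR; exists (k + 1), (~~ c) => n hn.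
  have : w n <> c by move=> e; apply: hne; exists n.
  exact: neq_negb.
exists n; rewrite (H n) wn eqxx -addn1 PoszD addrA lerD2r.
apply: (le_trans Hk); apply: (mono H); by rewrite lerBrDr.
Qed.

Lemma unb_left w f c : stepR w f c -> ~ ult_const_left w ->
  forall m : nat, exists k, f k + m%:Z <= f 0.
Proof.
move=> H nL; elim=> [|m [k Hk]]; first by exists 0; rewrite addr0.
have [n [hn wn]] : exists n, n <= k /\ w n = c.
  apply: NNPP => hne; apply: nL; exists k, (~~ c) => n hn.
  have : w n <> c by move=> e; apply: hne; exists n.
  exact: neq_negb.
exists (n - 1); apply: le_trans Hk.
rewrite -addn1 PoszD addrA -(addrAC _ 1) lerD2r.
have -> : f (n - 1) + 1 = f n by rewrite (H n) wn eqxx.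
exact: (mono H).
Qed.

Lemma ivt w f c : stepR w f c -> forall a (n : nat) i, f i <= a -> a < f (i + n%:Z) ->
  exists k, f k = a /\ w (k + 1) = c.
Proof.
move=> H a; elim=> [|n IH] i h1 h2; first by rewrite addr0 in h2; move: (le_lt_trans h1 h2); rewrite ltxx.
have e : i + (n.+1)%:Z = (i + 1) + n%:Z by rewrite -addn1 PoszD addrAC addrA.
rewrite e in h2.
case: (lerP (f (i + 1)) a) => h3; first exact: IH h3 h2.
move: h3; rewrite (stepR1 H); case: eqP => hw h3.
  exists i; split => //; apply/eqP; rewrite eq_le h1 /=; by rewrite -ltzD1.
by rewrite addr0 in h3; move: (le_lt_trans h1 h3); rewrite ltxx.
Qed.

Lemma crossing w f c : stepR w f c -> admissible w ->
  forall a, exists k, f k = a /\ w (k + 1) = c.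
Proof.
move=> H [nR nL] a.
have [i hi] : exists i, f i <= a.
  have [i hi] := unb_left H nL ((absz (f 0 - a))); exists i.
  have h := ler_norm (f 0 - a).
  rewrite abszE in hi.
  have : f i + (f 0 - a) <= f 0 by apply: le_trans hi; rewrite lerD2l.
  by rewrite addrA lerBlDr [f 0 + a]addrC lerD2r.
have [k hk] : exists k, a < f k.
  have [k hk] := unb_right H nR ((absz (a - f 0)) + 1)%nat; exists k.
  apply: lt_le_trans hk; rewrite PoszD addrA abszE ltzD1.
  by rewrite -lerBlDl ler_norm.
have ik : i <= k.
  case: (lerP i k) => // /ltW hki; move: (mono H hki) => h.
  by move: (le_lt_trans (le_trans h hi) hk); rewrite ltxx.
apply: (ivt H (n := (absz (k - i))) hi); by rewrite -int_split.
Qed.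

Lemma const_g w f c (A : Type) (g : int -> A) : stepR w f c ->
  (forall k, w (k + 1) != c -> g (k + 1) = g k) ->
  forall i j, f i = f j -> g i = g j.
Proof.
move=> H Hg.
have key : forall (n : nat) i, f i = f (i + n%:Z) -> g i = g (i + n%:Z).
  elim=> [|n IH] i; first by rewrite addr0.
  rewrite -addn1 PoszD addrA => e.
  have h1 := mono_n H n i.
  have := stepR1 H (i + n%:Z); rewrite -e.
  have h2 : f (i + n%:Z) <= f i by rewrite e (stepR1 H) lerDl; case: ifP.
  have e2 : f i = f (i + n%:Z) by apply/eqP; rewrite eq_le h1 h2.
  rewrite -e2; case: eqP => hw.
    by move/eqP; rewrite eq_sym -subr_eq0 [_ - f i]addrAC subrr add0r oner_eq0.
  move=> _; rewrite Hg; last by apply/eqP.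
  exact: IH.
move=> i j e; case: (lerP i j) => h.
  rewrite (int_split h) in e *; exact: key.
have h' := ltW h; rewrite (int_split h') in e *; symmetry; apply: key; by [].
Qed.

Import ZM.

Fixpoint Qp (w : frontier) (n : nat) : M2 :=
  match n with 0 => I2 | S m => mul2 (Qp w m) (MxZ (w (Posz (S m)))) end.
Fixpoint Qn (w : frontier) (n : nat) : M2 :=
  match n with 0 => I2 | S m => mul2 (Qn w m) (MiZ (w (- Posz m))) end.
Definition Q (w : frontier) (i : int) : M2 :=
  match i with Posz n => Qp w n | Negz n => Qn w n.+1 end.

Lemma QS w i : Q w i = mul2 (Q w (i - 1)) (MxZ (w i)).
Proof.
case: i => [[|m]|n].
- have -> : (Posz 0 - 1 : int) = Negz 0 by [].
  by rewrite /= oppr0 mulMiMx.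
- have -> : (Posz m.+1 - 1 : int) = Posz m by rewrite intS [1 + _]addrC addrK.
  by [].
- have -> : (Negz n - 1 : int) = Negz n.+1.
    by rewrite !NegzE -opprD -PoszD addn1.
  have e : (- Posz n.+1 : int) = Negz n by rewrite NegzE.
  by rewrite /= e mulMiMx.
Qed.

Lemma QS1 w i : Q w (i + 1) = mul2 (Q w i) (MxZ (w (i + 1))).
Proof. by rewrite QS addrK. Qed.

Lemma det_Qp w n : det2 (Qp w n) = 1%Z.
Proof. elim: n => [|n IH] /=; first by []. by rewrite det_Mx. Qed.
Lemma det_Qn w n : det2 (Qn w n) = 1%Z.
Proof. elim: n => [|n IH] /=; first by []. by rewrite det_Mi. Qed.
Lemma det_Q w i : det2 (Q w i) = 1%Z.
Proof. case: i => n; [exact: det_Qp | exact: det_Qn]. Qed.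

Lemma Qadd w (n : nat) i :
  Q w (i + n%:Z) = mul2 (Q w i) (prodZ (mkseq (fun k : nat => w (i + 1 + k%:Z)) n)).
Proof.
elim: n => [|n IH]; first by rewrite addr0 /= mulI.
rewrite -addn1 PoszD addrA QS1 IH addn1 mkseqS prodZ_rcons mul_assoc.
by rewrite [i + n%:Z + 1]addrAC.
Qed.


Lemma mulmx2E m n (A : 'M[int]_(m, 2)) (B : 'M[int]_(2, n)) i j :
  (A *m B) i j = A i ord0 * B ord0 j + A i ord_max * B ord_max j.
Proof.
rewrite mxE !big_ord_recl big_ord0 addr0.
by congr (_ + _); congr (A i _ * B _ j); apply/val_inj.
Qed.

Definition zn (z : Z) : int := Posz (Z.to_nat z).

Lemma znD x y : (0 <= x)%Z -> (0 <= y)%Z -> zn (x + y) = zn x + zn y.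
Proof. move=> hx hy; by rewrite /zn Z2Nat.inj_add // -PoszD. Qed.

Lemma MxE1 b B : a11 (mul2 (MxZ b) B) = if b then (a11 B + a21 B)%Z else a11 B.
Proof. destruct B, b; cbn [mul2 MxZ a11 a12 a21 a22]; ring. Qed.
Lemma MxE2 b B : a12 (mul2 (MxZ b) B) = if b then (a12 B + a22 B)%Z else a12 B.
Proof. destruct B, b; cbn [mul2 MxZ a11 a12 a21 a22]; ring. Qed.
Lemma MxE3 b B : a21 (mul2 (MxZ b) B) = if b then a21 B else (a11 B + a21 B)%Z.
Proof. destruct B, b; cbn [mul2 MxZ a11 a12 a21 a22]; ring. Qed.
Lemma MxE4 b B : a22 (mul2 (MxZ b) B) = if b then a22 B else (a12 B + a22 B)%Z.
Proof. destruct B, b; cbn [mul2 MxZ a11 a12 a21 a22]; ring. Qed.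

Lemma word_mat_prod l :
  [/\ word_mat l ord0 ord0 = zn (a11 (prodZ l)), word_mat l ord0 ord_max = zn (a12 (prodZ l)),
      word_mat l ord_max ord0 = zn (a21 (prodZ l)) & word_mat l ord_max ord_max = zn (a22 (prodZ l))].
Proof.
elim: l => [|b l [h1 h2 h3 h4]].
  by rewrite /= !mxE.
have [n1 [n2 [n3 n4]]] := NN_prod l.
have e : prodZ (b :: l) = mul2 (MxZ b) (prodZ l) by [].
rewrite e; move: (prodZ l) h1 h2 h3 h4 n1 n2 n3 n4 => B h1 h2 h3 h4 n1 n2 n3 n4.
have -> : word_mat (b :: l) = Mx b *m word_mat l by [].
rewrite !mulmx2E h1 h2 h3 h4.
clear e; rewrite MxE1 MxE2 MxE3 MxE4; case: b;
  rewrite !mxE /= ?mul1r ?mul0r ?addr0 ?add0r -?znD //.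
Qed.

Lemma word_value_prod l :
  word_value l = zn (a11 (prodZ l) + a12 (prodZ l) + a21 (prodZ l) + a22 (prodZ l)).
Proof.
have [h1 h2 h3 h4] := word_mat_prod l.
have [n1 [n2 [n3 n4]]] := NN_prod l.
rewrite /word_value !mulmx2E !mxE /= h1 h2 h3 h4 !mul1r !mulr1 !znD; try lia.
by rewrite addrACA !addrA.
Qed.


Lemma ltzE1 (x y : int) : (x < y) = (x + 1 <= y).
Proof. by rewrite -ltzD1 ltrD2r. Qed.

Lemma tile_pos (t : point -> nat) : SL2_tiling t -> forall p, (0 < t p)%N.
Proof.
move=> H [a b]; rewrite lt0n; apply/eqP => e.
by move: (H a (b - 1)) => /=; rewrite subrK e mul0n addn1.
Qed.

Lemma cancel3 (x y v z u : nat) : (0 < x)%N -> (x * y = z * u + 1)%N -> (x * v = z * u + 1)%N -> y = v.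
Proof. move=> hx h1 h2; apply/eqP; by rewrite -(eqn_pmul2l hx) h1 h2. Qed.

Lemma agree w (X Y : int -> int) (t1 t2 : point -> nat) :
  stepR w X true -> stepR w Y false -> SL2_tiling t1 -> SL2_tiling t2 ->
  (forall i, t1 (X i, Y i) = 1%N) -> (forall i, t2 (X i, Y i) = 1%N) ->
  forall i j, t1 (X j, Y i) = t2 (X j, Y i).
Proof.
move=> HX HY S1 S2 P1 P2.
have below : forall n : nat, forall i j, i <= j -> j <= i + n%:Z -> t1 (X j, Y i) = t2 (X j, Y i).
  elim=> [|n IH] i j hij hji.
    rewrite addr0 in hji; have -> : j = i by apply/eqP; rewrite eq_le hji hij.
    by rewrite P1 P2.
  rewrite -addn1 PoszD addrA in hji.
  case: (eqVneq j i) => [-> | hne]; first by rewrite P1 P2.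
  have hlt : i + 1 <= j by rewrite -ltzE1 lt_neqAle eq_sym hne hij.
  case Ej: (w j); last first.
    have -> : X j = X (j - 1) by rewrite (HX j) Ej addr0.
    apply: IH; first by rewrite lerBrDr.
    by rewrite lerBlDr.
  case Ei: (w (i + 1)).
    have -> : Y i = Y (i + 1) by rewrite (stepR1 HY) Ei addr0.
    apply: IH => //; by rewrite addrAC.
  have ne1 : j != i + 1 by apply/eqP => e; move: Ej; rewrite e Ei.
  have hlt2 : i + 1 <= j - 1.
    by rewrite lerBrDr -ltzE1 lt_neqAle eq_sym ne1 hlt.
  have eY : Y i + 1 = Y (i + 1) by rewrite (stepR1 HY) Ei.
  have eX : X (j - 1) + 1 = X j by rewrite (HX j) Ej.
  have h1 := S1 (X (j - 1)) (Y i); have h2 := S2 (X (j - 1)) (Y i).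
  rewrite /= eY eX in h1 h2.
  have e1 : t1 (X (j - 1), Y (i + 1)) = t2 (X (j - 1), Y (i + 1)).
    apply: IH => //; rewrite lerBlDr; apply: le_trans hji _; by rewrite lerD2r addrAC lerDl.
  have e2 : t1 (X (j - 1), Y i) = t2 (X (j - 1), Y i).
    apply: IH; [by apply: le_trans hlt2; rewrite lerDl | by rewrite lerBlDr].
  have e3 : t1 (X j, Y (i + 1)) = t2 (X j, Y (i + 1)).
    apply: IH => //; by rewrite addrAC.
  rewrite e1 e2 e3 in h1.
  exact: (cancel3 (tile_pos S2 _) h1 h2).
have above : forall n : nat, forall i j, j <= i -> i <= j + n%:Z -> t1 (X j, Y i) = t2 (X j, Y i).
  elim=> [|n IH] i j hij hji.
    rewrite addr0 in hji; have -> : j = i by apply/eqP; rewrite eq_le hji hij.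
    by rewrite P1 P2.
  rewrite -addn1 PoszD addrA in hji.
  case: (eqVneq j i) => [-> | hne]; first by rewrite P1 P2.
  have hlt : j + 1 <= i by rewrite -ltzE1 lt_neqAle hne hij.
  case Ej: (w (j + 1)); last first.
    have -> : X j = X (j + 1) by rewrite (stepR1 HX) Ej addr0.
    apply: IH => //; by rewrite addrAC.
  case Ei: (w i).
    have -> : Y i = Y (i - 1) by rewrite (HY i) Ei addr0.
    apply: IH; first by rewrite lerBrDr.
    by rewrite lerBlDr.
  have ne1 : i != j + 1 by apply/eqP => e; move: Ei; rewrite e Ej.
  have hlt2 : j + 1 <= i - 1.
    by rewrite lerBrDr -ltzE1 lt_neqAle eq_sym ne1 hlt.
  have eY : Y (i - 1) + 1 = Y i by rewrite (HY i) Ei.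
  have eX : X j + 1 = X (j + 1) by rewrite (stepR1 HX) Ej.
  have h1 := S1 (X j) (Y (i - 1)); have h2 := S2 (X j) (Y (i - 1)).
  rewrite /= eY eX in h1 h2.
  have e1 : t1 (X (j + 1), Y (i - 1)) = t2 (X (j + 1), Y (i - 1)).
    apply: IH => //; rewrite lerBlDr; apply: le_trans hji _; by rewrite lerD2r addrAC lerDl.
  have e2 : t1 (X j, Y (i - 1)) = t2 (X j, Y (i - 1)).
    apply: IH; [by apply: le_trans hlt2; rewrite lerDl | by rewrite lerBlDr].
  have e3 : t1 (X (j + 1), Y i) = t2 (X (j + 1), Y i).
    apply: IH => //; by rewrite addrAC.
  rewrite e1 e2 e3 mulnC in h1; rewrite mulnC in h2.
  exact: (cancel3 (tile_pos S2 _) h1 h2).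
move=> i j; case: (lerP i j) => h.
  apply: (below (absz (j - i))) => //; by rewrite -int_split.
have h' := ltW h; apply: (above (absz (i - j))) => //; by rewrite -int_split.
Qed.


Theorem theorem3 (w : frontier) (P : int -> point) :
  admissible w -> embedding w P ->
  exists t : point -> nat,
    [/\ SL2_tiling t,
        (forall i : int, t (P i) = 1%N),
        (forall t' : point -> nat, SL2_tiling t' ->
            (forall i : int, t' (P i) = 1%N) -> t' = t) &
        (forall (M : point) (r s : int), below P M -> is_L P M r -> is_U P M s ->
            (t M)%:Z = word_value (inner_word w r s))].
Proof.
move=> HA HP.
pose X i := (P i).1; pose Y i := (P i).2.
have HX : stepR w X true by move=> i; rewrite /X {1}(HP i) /=; case: (w i).
have HY : stepR w Y false by move=> i; rewrite /Y {1}(HP i) /=; case: (w i).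
have PXY : forall i, P i = (X i, Y i) by move=> i; rewrite /X /Y; case: (P i).
pose ci a := epsilon (inhabits (0 : int)) (fun j => X j = a).
have ciP : forall a, X (ci a) = a.
  move=> a; apply: (epsilon_spec (inhabits (0:int)) (fun j => X j = a)).
  have [k [hk _]] := crossing HX HA a; by exists k.
pose ri b := epsilon (inhabits (0 : int)) (fun j => Y j = b).
have riP : forall b, Y (ri b) = b.
  move=> b; apply: (epsilon_spec (inhabits (0:int)) (fun j => Y j = b)).
  have [k [hk _]] := crossing HY HA b; by exists k.
have colX : forall i j, X i = X j -> col2 (Q w i) = col2 (Q w j).
  apply: (@const_g w X true _ (fun i => col2 (Q w i)) HX) => k hk.
  rewrite QS1; have -> : w (k + 1) = false by move: hk; case: (w (k + 1)).
  exact: col2_y.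
have colY : forall i j, Y i = Y j -> col1 (Q w i) = col1 (Q w j).
  apply: (@const_g w Y false _ (fun i => col1 (Q w i)) HY) => k hk.
  rewrite QS1; have -> : w (k + 1) = true by move: hk; case: (w (k + 1)).
  exact: col1_x.
pose Tz a b := dv (col1 (Q w (ri b))) (col2 (Q w (ci a))).
have Tz_at : forall i j, Tz (X j) (Y i) = dv (col1 (Q w i)) (col2 (Q w j)).
  by move=> i j; rewrite /Tz (colY (ri (Y i)) i) ?riP // (colX (ci (X j)) j) ?ciP.
have Tz_nn : forall i j, (0 <= dv (col1 (Q w i)) (col2 (Q w j)))%Z.
  move=> i j; case: (lerP i j) => h.
    rewrite (int_split h) Qadd L1 det_Q.
    have [_ [_ [_ h4]]] := NN_prod (mkseq (fun k : nat => w (i + 1 + k%:Z)) (absz (j - i))); lia.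
  rewrite (int_split (ltW h)) Qadd L2 det_Q.
  have [h4 _] := NN_prod (mkseq (fun k : nat => w (j + 1 + k%:Z)) (absz (i - j))); lia.
have Tz_nn' : forall a b, (0 <= Tz a b)%Z.
  by move=> a b; rewrite -(ciP a) -(riP b) Tz_at.
pose t (M : point) := Z.to_nat (Tz M.1 M.2).
have tE : forall i j, Z.of_nat (t (X j, Y i)) = dv (col1 (Q w i)) (col2 (Q w j)).
  by move=> i j; rewrite /t /= Z2Nat.id // Tz_at.
have St : SL2_tiling t.
  move=> a b /=.
  have [k [hk Ek]] := crossing HX HA a.
  have [m [hm Em]] := crossing HY HA b.
  have eXk : X (k + 1) = a + 1 by rewrite (stepR1 HX) Ek hk.
  have eYm : Y (m + 1) = b + 1 by rewrite (stepR1 HY) Em hm.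
  rewrite -eXk -eYm -hk -hm.
  apply: Nat2Z.inj; rewrite -multE -plusE Nat2Z.inj_add !Nat2Z.inj_mul !tE !QS1 Ek Em.
  have := plucker (col1 (mul2 (Q w m) (MxZ false))) (col1 (Q w m)) (col2 (Q w k))
     (col2 (mul2 (Q w k) (MxZ true))).
  rewrite (dv_anti (col1 (mul2 _ _)) (col1 (Q w m))) L4 L3 !det_Q /=; lia.
have Pt : forall i, t (P i) = 1%N.
  by move=> i; apply: Nat2Z.inj; rewrite PXY tE L5 det_Q.
exists t; split => //.
- move=> t' S' P'; apply: functional_extensionality => -[a b].
  rewrite -(ciP a) -(riP b).
  apply: (agree HX HY S' St) => i; by rewrite -PXY.
- move=> [a b] r s [Hnp _] [Lr1 [Lr2 Lr3]] [Us1 [Us2 Us3]] /=.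
  change (Y r = b) in Lr1; change (is_true (X r < a)) in Lr2; change (X s = a) in Us1; change (is_true (b < Y s)) in Us2.
  have rs : r < s.
    case: (lerP s r) => // h; have := mono HX h; rewrite -/(X s) -/(X r) Us1 => h'.
    by move: (le_lt_trans h' Lr2); rewrite ltxx.
  have ws : w s = true.
    case Ews: (w s) => //.
    have e1 : X (s - 1) = a by rewrite -Us1 (HX s) Ews addr0.
    have e2 : Y s = Y (s - 1) + 1 by rewrite (HY s) Ews.
    have h3 : b <= Y (s - 1) by rewrite -ltzD1 -e2.
    case: (eqVneq (Y (s - 1)) b) => e3.
      by exfalso; apply: (Hnp (s - 1)); rewrite PXY e1 e3.
    have h4 : b < Y (s - 1) by rewrite lt_neqAle eq_sym e3 h3.
    have := Us3 (s - 1) e1 h4; rewrite -/(Y s) -/(Y (s - 1)) e2.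
    by rewrite -ltzE1 ltxx.
  have wr : w (r + 1) = false.
    case Ewr: (w (r + 1)) => //.
    have e1 : Y (r + 1) = b by rewrite (stepR1 HY) Ewr addr0.
    have e2 : X (r + 1) = X r + 1 by rewrite (stepR1 HX) Ewr.
    have h3 : X (r + 1) <= a by rewrite e2 -ltzE1.
    case: (eqVneq (X (r + 1)) a) => e3.
      by exfalso; apply: (Hnp (r + 1)); rewrite PXY e1 e3.
    have h4 : X (r + 1) < a by rewrite lt_neqAle e3 h3.
    have := Lr3 (r + 1) e1 h4; rewrite -/(X r) -/(X (r + 1)) e2.
    by rewrite -ltzE1 ltxx.
  have h2 : r + 1 + 1 <= s.
    rewrite -ltzE1 lt_neqAle -ltzE1 rs andbT.
    by apply/eqP => e; move: ws; rewrite -e wr.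
  have h2' : r + 2 <= s by rewrite -addrA in h2.
  have e2 : s - r - 2 = s - (r + 2) by rewrite [in RHS]opprD addrA.
  have es : s = r + 1 + Posz (absz (s - r - 2)%R) + 1.
    rewrite addrAC -[r + 1 + 1]addrA e2; exact: int_split h2'.
  have Qs : Q w s = mul2 (Q w r) (mul2 (mul2 (MxZ false) (prodZ (inner_word w r s))) (MxZ true)).
    rewrite {1}es QS1 -es ws Qadd QS1 wr.
    have -> : r + 1 + 1 = r + 2 by rewrite -addrA.
    by rewrite !mul_assoc.
  rewrite word_value_prod /zn; congr Posz; rewrite /t /=; congr Z.to_nat.
  rewrite -Us1 -Lr1 Tz_at Qs L1 det_Q a22_formula; lia.
Qed.
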